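(* For all non-negative integers $n$ and $p$, $$\begin{aligned}\sum_{k=1}^n\frac{k}{2^{2k}}\binom{2(k+p)}{k+p}\binom{k+p}{k}\left(O_{k+p}-O_p\right)&=\frac{n}{2^{2n}}\binom{2(p+1)}{p+1}^{-1}\binom{2p}{p}\binom{2(n+p+1)}{n+p+1}\binom{n+p+1}{n}\left(O_{n+p+1}-O_{p+1}\right)\\&\quad-\frac{1}{2^{2n-2}}\binom{2(p+2)}{p+2}^{-1}\binom{2p}{p}\binom{2(n+p+1)}{n+p+1}\binom{n+p+1}{n-1}\left(O_{n+p+1}-O_{p+2}\right).\end{aligned}$$ In particular, $\sum_{k=1}^n\frac{k}{2^{2k}}\binom{2k}{k}O_k=\frac{n(n+1)}{2^{2n+1}}\binom{2(n+1)}{n+1}(O_{n+1}-1)-\frac{n(n+1)}{3\cdot2^{2n}}\binom{2(n+1)}{n+1}\left(O_{n+1}-\frac43\right)$.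
   Context: The odd harmonic numbers are $O_n=\sum_{k=1}^n\frac{1}{2k-1}$, $O_0=0$. Binomial coefficients $\binom{a}{-1}$ are $0$. *)

(* Defs.v *)
From mathcomp Require Import all_boot all_order all_algebra.
Set Implicit Arguments. Unset Strict Implicit. Unset Printing Implicit Defensive.
Import Order.TTheory GRing.Theory Num.Theory.
Local Open Scope ring_scope.

Definition oddH (n : nat) : rat :=
  \sum_(1 <= k < n.+1) ((2 * k - 1)%N%:R)^-1.

Definition binomZ (a : nat) (k : int) : nat :=
  match k with Posz k' => 'C(a, k') | Negz _ => 0%N end.

(* Main.v *)
Require Import Defs.
From mathcomp Require Import all_boot all_order all_algebra.
From mathcomp Require Import zify ring lra.
Import Order.TTheory GRing.Theory Num.Theory.
Local Open Scope ring_scope.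

Lemma C2S m : (m.+1 * 'C(2 * m.+1, m.+1) = 2 * (2 * m).+1 * 'C(2 * m, m))%N.
Proof.
have h1 := mul_bin_diag (2 * m.+1) m.
have h2 := mul_bin_diag (2 * m).+1 m. simpl in h2.
have e : ((2 * m.+1).-1 = (2 * m).+1)%N by lia.
rewrite e /= in h1.
have h3 : 'C((2 * m).+1, m.+1) = 'C((2 * m).+1, m).
  rewrite -[in RHS](@bin_sub (2 * m).+1 m); last by lia.
  by have -> : ((2 * m).+1 - m = m.+1)%N by lia.
by rewrite -h1 -[RHS]mulnA h2 h3 mulnA.
Qed.

Definition G (p k : nat) : rat := ('C(2 * (k + p), k + p) * 'C(k + p, k))%N%:R.

Lemma GSn p k : (k.+1 * ('C(2 * (k.+1 + p), k.+1 + p) * 'C(k.+1 + p, k.+1))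
   = 2 * (2 * (k + p)).+1 * ('C(2 * (k + p), k + p) * 'C(k + p, k)))%N.
Proof.
rewrite addSn.
have h := mul_bin_diag (k+p).+1 k. simpl in h.
rewrite mulnCA -h mulnA (mulnC 'C(_, _)) C2S; by rewrite mulnA.
Qed.

Lemma GS p k : k.+1%:R * G p k.+1 = 2 * (2 * (k + p)).+1%:R * G p k.
Proof. by rewrite /G -natrM GSn !natrM. Qed.

Lemma oddHS n : oddH n.+1 = oddH n + ((2 * n).+1%:R)^-1.
Proof.
rewrite /oddH big_nat_recr //=; congr (_ + (_%:R)^-1); lia.
Qed.

Definition X p n := (oddH (n + p).+1 - oddH p.+1) / (2 * (2 * p).+1%:R)
   - (oddH (n + p).+1 - oddH p.+2) / ((2 * p).+1%:R * (2 * p.+1).+1%:R).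

Lemma key p n : \sum_(1 <= k < n.+1) (k%:R / 2 ^+ (2 * k) * G p k * (oddH (k + p) - oddH p))
  = (n * n.+1)%N%:R * G p n.+1 / 2 ^+ (2 * n) * X p n.
Proof.
elim: n => [|n IH]; first by rewrite big_geq // mul0r !mul0r.
rewrite big_nat_recr //= IH /X.
have hG := GS p n.+1.
set N : rat := n%:R. set P : rat := p%:R.
set a := oddH (n + p).+1. set o := oddH p. set g := G p n.+1.
set t := (2:rat) ^+ (2 * n).
have t0 : t != 0 by rewrite expf_neq0.
have hn : 0 <= N by apply: ler0n.
have hp : 0 <= P by apply: ler0n.
have c1 : n.+1%:R = N + 1 :> rat by rewrite -natr1.
have c2 : n.+2%:R = N + 2 :> rat by rewrite -natr1 c1 -addrA.
have c3 : (2 * p).+1%:R = 2 * P + 1 :> rat by rewrite -natr1 natrM.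
have c4 : (2 * p.+1).+1%:R = 2 * P + 3 :> rat.
  by rewrite -natr1 natrM -natr1 /P; ring.
have c5 : (2 * (n.+1 + p)).+1%:R = 2 * N + 2 * P + 3 :> rat.
  by rewrite -natr1 natrM addSn -(natr1 (n + p)) natrD /N /P; ring.
have c6 : (n * n.+1)%N%:R = N * (N + 1) :> rat by rewrite natrM c1.
have c7 : (n.+1 * n.+2)%N%:R = (N + 1) * (N + 2) :> rat by rewrite natrM c1 c2.
have e1 : oddH (n.+1 + p) = a by rewrite addSn.
have e2 : oddH (n.+1 + p).+1 = a + (2 * N + 2 * P + 3)^-1.
  by rewrite oddHS e1 -c5 addSn.
have e3 : oddH p.+1 = o + (2 * P + 1)^-1 by rewrite oddHS c3.
have e4 : oddH p.+2 = o + (2 * P + 1)^-1 + (2 * P + 3)^-1 by rewrite oddHS e3 c4.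
have e5 : G p n.+2 = 2 * (2 * N + 2 * P + 3) * g / (N + 2).
  by rewrite -c5 -hG -c2 mulrC mulKf // c2; apply: lt0r_neq0; lra.
have e6 : (2:rat) ^+ (2 * n.+1) = 4 * t by rewrite mulnS exprD.
rewrite e2 e3 e4 e5 e6 c1 c3 c4 c6 c7.
field; rewrite t0 /=.
by rewrite !lt0r_neq0 //; lra.
Qed.

Lemma oddH0 : oddH 0 = 0. Proof. by rewrite /oddH big_geq. Qed.

Lemma part2 (n : nat) :
    \sum_(1 <= k < n.+1) (k%:R / 2 ^+ (2 * k) * 'C(2 * k, k)%:R * oddH k)
    = (n * n.+1)%N%:R / 2 ^+ (2 * n + 1) * 'C(2 * n.+1, n.+1)%:R
        * (oddH n.+1 - 1)
      - (n * n.+1)%N%:R / (3 * 2 ^+ (2 * n)) * 'C(2 * n.+1, n.+1)%:R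
        * (oddH n.+1 - 4 / 3).
Proof.
transitivity (\sum_(1 <= k < n.+1) (k%:R / 2 ^+ (2 * k) * G 0 k * (oddH (k + 0) - oddH 0))).
  apply: eq_bigr => k _; by rewrite /G !addn0 binn muln1 oddH0 subr0.
rewrite key /X /G !addn0 binn muln1.
have o1 : oddH 1 = 1 by rewrite oddHS oddH0 add0r invr1.
have o2 : oddH 2 = 4 / 3 by rewrite oddHS o1; field.
rewrite o1 o2 addn1 exprS.
set t := (2:rat) ^+ (2 * n).
have t0 : t != 0 by rewrite expf_neq0.
field; by rewrite t0.
Qed.

Lemma part1 (n p : nat) :
    \sum_(1 <= k < n.+1)
       (k%:R / 2 ^+ (2 * k) * ('C(2 * (k + p), k + p) * 'C(k + p, k))%N%:R
          * (oddH (k + p) - oddH p))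
    = n%:R / 2 ^+ (2 * n) * ('C(2 * p.+1, p.+1)%:R)^-1 * 'C(2 * p, p)%:R
        * ('C(2 * (n + p).+1, (n + p).+1) * 'C((n + p).+1, n))%N%:R
        * (oddH (n + p).+1 - oddH p.+1)
      - ((2 : rat) ^ (2 * (n%:Z) - 2))^-1 * ('C(2 * p.+2, p.+2)%:R)^-1
        * 'C(2 * p, p)%:R
        * ('C(2 * (n + p).+1, (n + p).+1) * binomZ (n + p).+1 (n%:Z - 1))%N%:R
        * (oddH (n + p).+1 - oddH p.+2).
Proof.
transitivity (\sum_(1 <= k < n.+1) (k%:R / 2 ^+ (2 * k) * G p k * (oddH (k + p) - oddH p))); first by [].
rewrite key.
case: n => [|m].
  have -> : binomZ (0 + p).+1 (0%:Z - 1) = 0%N by [].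
  by rewrite !mul0r muln0 mulr0 mul0r subr0.
have -> : binomZ (m.+1 + p).+1 (m.+1%:Z - 1) = 'C((m.+1 + p).+1, m).
  by rewrite /binomZ (_ : m.+1%:Z - 1 = m%:Z) //; lia.
have -> : (2 : rat) ^ (2 * (m.+1%:Z) - 2) = 2 ^+ (2 * m).
  by rewrite (_ : 2 * (m.+1%:Z) - 2 = (2 * m)%N%:Z) //; lia.
set M := (m.+1 + p).+1.
have nA : (p.+1 * ('C(2 * M, M) * 'C(M, m.+1)) = m.+2 * ('C(2 * M, M) * 'C(M, m.+2)))%N.
  have h := mul_bin_left M m.+1.
  rewrite (_ : (M - m.+1 = p.+1)%N) in h; last by rewrite /M; lia.
  by rewrite mulnCA -h mulnCA.
have nB : (p.+2 * ('C(2 * M, M) * 'C(M, m)) = m.+1 * ('C(2 * M, M) * 'C(M, m.+1)))%N.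
  have h := mul_bin_left M m.
  rewrite (_ : (M - m = p.+2)%N) in h; last by rewrite /M; lia.
  by rewrite mulnCA -h mulnCA.
have n1 := C2S p.
have n2 := C2S p.+1.
have g0 : (0 < 'C(2 * p, p))%N by rewrite bin_gt0; lia.
set N : rat := m%:R. set P : rat := p%:R.
have hn : 0 <= N by apply: ler0n.
have hp : 0 <= P by apply: ler0n.
have c1 : m.+1%:R = N + 1 :> rat by rewrite -natr1.
have c2 : m.+2%:R = N + 2 :> rat by rewrite -natr1 c1 -addrA.
have d1 : p.+1%:R = P + 1 :> rat by rewrite -natr1.
have d2 : p.+2%:R = P + 2 :> rat by rewrite -natr1 d1 -addrA.
have c3 : (2 * p).+1%:R = 2 * P + 1 :> rat by rewrite -natr1 natrM.
have c4 : (2 * p.+1).+1%:R = 2 * P + 3 :> rat.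
  by rewrite -natr1 natrM -natr1 /P; ring.
have rA := congr1 (fun x => x%:R : rat) nA.
have rB := congr1 (fun x => x%:R : rat) nB.
have r1 := congr1 (fun x => x%:R : rat) n1.
have r2 := congr1 (fun x => x%:R : rat) n2.
rewrite /= !natrM c1 c2 d1 d2 c3 c4 in rA rB r1 r2.
rewrite /X -/M /G -/M.
have gn : 'C(2 * p, p)%:R != 0 :> rat by rewrite pnatr_eq0 -lt0n.
have p1 : P + 1 != 0 by apply: lt0r_neq0; lra.
have p2 : P + 2 != 0 by apply: lt0r_neq0; lra.
have m2 : N + 2 != 0 by apply: lt0r_neq0; lra.
have eb1 : 'C(2 * p.+1, p.+1)%:R = 2 * (2 * P + 1) * 'C(2 * p, p)%:R / (P + 1) :> rat.
  by rewrite -r1 mulrAC divff // mul1r.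
have eb2 : 'C(2 * p.+2, p.+2)%:R = 2 * (2 * P + 3) * 'C(2 * p.+1, p.+1)%:R / (P + 2) :> rat.
  by rewrite -r2 mulrAC divff // mul1r.
have e2 : 'C(2 * M, M)%:R * 'C(M, m.+2)%:R = (P + 1) * ('C(2 * M, M)%:R * 'C(M, m.+1)%:R) / (N + 2) :> rat.
  by rewrite rA mulrAC divff // mul1r.
have e0 : 'C(2 * M, M)%:R * 'C(M, m)%:R = (N + 1) * ('C(2 * M, M)%:R * 'C(M, m.+1)%:R) / (P + 2) :> rat.
  by rewrite -rB mulrAC divff // mul1r.
rewrite !natrM e2 e0 eb2 eb1 c1 c2 c3 c4 mulnS exprD.
set y := 'C(2 * M, M)%:R * 'C(M, m.+1)%:R.
set t := (2:rat) ^+ (2 * m).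
have t0 : t != 0 by rewrite expf_neq0.
set a := oddH M. rewrite oddHS -/a oddHS c3 c4.
field.
have q1 := ler0n rat p. have q2 := ler0n rat m.
by rewrite gn t0 /= !lt0r_neq0 //; lra.
Qed.

Theorem theorem15 :
  (forall n p : nat,
    \sum_(1 <= k < n.+1)
       (k%:R / 2 ^+ (2 * k) * ('C(2 * (k + p), k + p) * 'C(k + p, k))%N%:R
          * (oddH (k + p) - oddH p))
    = n%:R / 2 ^+ (2 * n) * ('C(2 * p.+1, p.+1)%:R)^-1 * 'C(2 * p, p)%:R
        * ('C(2 * (n + p).+1, (n + p).+1) * 'C((n + p).+1, n))%N%:R
        * (oddH (n + p).+1 - oddH p.+1)
      - ((2 : rat) ^ (2 * (n%:Z) - 2))^-1 * ('C(2 * p.+2, p.+2)%:R)^-1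
        * 'C(2 * p, p)%:R
        * ('C(2 * (n + p).+1, (n + p).+1) * binomZ (n + p).+1 (n%:Z - 1))%N%:R
        * (oddH (n + p).+1 - oddH p.+2))
  /\
  (forall n : nat,
    \sum_(1 <= k < n.+1) (k%:R / 2 ^+ (2 * k) * 'C(2 * k, k)%:R * oddH k)
    = (n * n.+1)%N%:R / 2 ^+ (2 * n + 1) * 'C(2 * n.+1, n.+1)%:R
        * (oddH n.+1 - 1)
      - (n * n.+1)%N%:R / (3 * 2 ^+ (2 * n)) * 'C(2 * n.+1, n.+1)%:R
        * (oddH n.+1 - 4 / 3)).
Proof. split; [exact: part1 | exact: part2]. Qed.
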